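(* Let $n\ge 2$, $\beta\in\partial\mathbb{D}$, $\{\alpha_j\}_{j=0}^{n-2}\in\mathbb{D}^{n-1}$. Write $P_n(z)=P_n(z;\{\alpha_j\}_{j=0}^{n-2},\beta)$, $Q_n(z)=Q_n(z;\{\alpha_j\}_{j=0}^{n-2},\beta)$, and $P_{n-1}(z)=P_{n-1}(z;\{\alpha_{j+1}\}_{j=0}^{n-3},\beta)$, $Q_{n-1}(z)=Q_{n-1}(z;\{\alpha_{j+1}\}_{j=0}^{n-3},\beta)$. Then \[ P_n=\tfrac12(z-\bar\alpha_0+1-\alpha_0z)P_{n-1}+\tfrac12(z-\bar\alpha_0-1+\alpha_0z)Q_{n-1}, \] \[ Q_n=\tfrac12(z+\bar\alpha_0+1+\alpha_0z)Q_{n-1}+\tfrac12(z+\bar\alpha_0-1-\alpha_0z)P_{n-1}. \]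
   Context: For Verblunsky coefficients $\alpha_0,\alpha_1,\dots\in\mathbb{D}$ the monic orthogonal polynomials on the unit circle satisfy $\Phi_0=1$, $\Phi_{k+1}(z)=z\Phi_k(z)-\bar\alpha_k\Phi_k^*(z)$ with $\Phi_k^*(z)=z^k\overline{\Phi_k(1/\bar z)}$; the second kind polynomials $\Psi_k$ satisfy the same recursion with each $\alpha_j$ replaced by $-\alpha_j$. For $m\ge1$ and $\beta\in\partial\mathbb{D}$, $P_m(z;\{\alpha_j\}_{j=0}^{m-2},\beta)=z\Phi_{m-1}(z)-\bar\beta\Phi_{m-1}^*(z)$ and $Q_m(z;\{\alpha_j\}_{j=0}^{m-2},\beta)=z\Psi_{m-1}(z)+\bar\beta\Psi_{m-1}^*(z)$, with $\Phi_{m-1},\Psi_{m-1}$ built from $\alpha_0,\dots,\alpha_{m-2}$. *)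

(* Defs.v *)
From HB Require Import structures.
From mathcomp Require Import all_boot all_order all_algebra.
Set Implicit Arguments. Unset Strict Implicit. Unset Printing Implicit Defensive.
Import Order.TTheory GRing.Theory Num.Theory.
Local Open Scope ring_scope.

(* C : numClosedFieldType (complex-like field with conjugation x^* and norm);
   the complex numbers (e.g. R[i] for R real closed, algC) are instances. *)

(* reversed polynomial of degree-index k:  p^*(z) = z^k conj(p(1/conj z)) *)
Definition rstar (C : numClosedFieldType) (k : nat) (p : {poly C}) : {poly C} :=
  \poly_(i < k.+1) (p`_(k - i))^*.

(* monic OPUC Phi_k built from alpha_0, ..., alpha_{k-1} *)
Fixpoint Phi (C : numClosedFieldType) (a : nat -> C) (k : nat) : {poly C} :=
  match k with
  | 0 => 1
  | k'.+1 => 'X * Phi a k' - ((a k')^*) *: rstar k' (Phi a k')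
  end.

Definition Psi (C : numClosedFieldType) (a : nat -> C) (k : nat) : {poly C} :=
  Phi (fun j => - a j) k.

(* P_m(z; {alpha_j}_{j=0}^{m-2}, beta) and Q_m(z; ...), m >= 1 *)
Definition Ppar (C : numClosedFieldType) (m : nat) (a : nat -> C) (b : C) : {poly C} :=
  'X * Phi a m.-1 - (b^*) *: rstar m.-1 (Phi a m.-1).

Definition Qpar (C : numClosedFieldType) (m : nat) (a : nat -> C) (b : C) : {poly C} :=
  'X * Psi a m.-1 + (b^*) *: rstar m.-1 (Psi a m.-1).

(* Main.v *)
Require Import Defs.
From HB Require Import structures.
From mathcomp Require Import all_boot all_order all_algebra.
From mathcomp Require Import ring.
Import Order.TTheory GRing.Theory Num.Theory.
Local Open Scope ring_scope.

Section Aux.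
Context {C : numClosedFieldType}.

Lemma size_Phi (a : nat -> C) k : (size (Phi a k) <= k.+1)%N.
Proof.
elim: k => [|k IH] /=; first by rewrite size_poly1.
rewrite (leq_trans (size_polyD _ _)) // geq_max; apply/andP; split.
  rewrite mulrC (leq_trans (size_polyMleq _ _)) // size_polyX.
  by rewrite addn2 /=.
rewrite size_polyN (leq_trans (size_scale_leq _ _)) //.
by rewrite (leq_trans (size_poly _ _)).
Qed.

Lemma rstar_step (p : {poly C}) (c : C) k : (size p <= k.+1)%N ->
  rstar k.+1 ('X * p - c *: rstar k p) = rstar k p - c^* *: ('X * p).
Proof.
move=> sp; apply/polyP => i.
rewrite /rstar !coefE.
case: i => [|j].
  by rewrite subn0 /= ltnn !mulr0 !subr0 subn0.
rewrite subSS /= ltnS.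
case: (ltngtP j k) => [ltjk | gtjk | ->].
- have -> : (k - j)%N == 0%N = false by apply/negbTE; rewrite subn_eq0 -ltnNge.
  have -> : (k - j < k.+1)%N by rewrite ltnS leq_subr.
  rewrite !ltnS ltjk (ltnW ltjk) subKn ?(ltnW ltjk) //.
  rewrite rmorphB rmorphM /= conjCK.
  have -> : (k - j).-1 = (k - j.+1)%N by rewrite subnS.
  by [].
- have h1 : (j < k.+1)%N = false by rewrite ltnS leqNgt gtjk.
  have h2 : (j.+1 < k.+1)%N = false by rewrite ltnS ltnNge ltnW.
  rewrite h1 h2 nth_default ?mulr0 ?subr0 //.
  by rewrite (leq_trans sp).
- rewrite subnn eqxx ltnn ltnSn /=.
  by rewrite !sub0r subn0 rmorphN rmorphM /= conjCK.
Qed.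

Fixpoint F (a : nat -> C) (u v : {poly C}) (k : nat) : {poly C} * {poly C} :=
  match k with
  | 0 => (u, v)
  | k'.+1 => ('X * (F a u v k').1 - (a k')^* *: (F a u v k').2,
              (F a u v k').2 - a k' *: ('X * (F a u v k').1))
  end.

Lemma F_S a u v k : F a u v k.+1 =
  ('X * (F a u v k).1 - (a k)^* *: (F a u v k).2,
   (F a u v k).2 - a k *: ('X * (F a u v k).1)).
Proof. by []. Qed.

Lemma rstar0_1 : rstar 0 (1 : {poly C}) = 1.
Proof.
apply/polyP => i; rewrite /rstar coef_poly; case: i => [|i] /=.
  by rewrite coefC /= conjC1.
by rewrite coefC.
Qed.

Lemma F_Phi a k : F a 1 1 k = (Phi a k, rstar k (Phi a k)).
Proof.
elim: k => [|k IH]; first by rewrite /= rstar0_1.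
rewrite F_S IH /=; congr pair.
by rewrite rstar_step ?size_Phi // conjCK.
Qed.

Lemma F_neg a u v k :
  F a u (- v) k = ((F (fun j => - a j) u v k).1, - (F (fun j => - a j) u v k).2).
Proof.
elim: k => [|k IH] //.
rewrite !F_S IH /=; congr pair; rewrite -!mul_polyC ?rmorphN /= ?polyCN; ring.
Qed.

Lemma F_lin a x y u v u' v' k :
  F a (x * u + y * u') (x * v + y * v') k =
  (x * (F a u v k).1 + y * (F a u' v' k).1, x * (F a u v k).2 + y * (F a u' v' k).2).
Proof.
elim: k => [|k IH] //.
rewrite !F_S IH /=; congr pair; rewrite -!mul_polyC; ring.
Qed.

Lemma F_shift a u v k :
  F a u v k.+1 = F (fun j => a j.+1) ('X * u - (a 0%N)^* *: v) (v - a 0%N *: ('X * u)) k.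
Proof.
elim: k => [|k IH] //.
by rewrite [LHS]F_S IH.
Qed.
End Aux.
Arguments Phi : simpl never.
Arguments rstar : simpl never.

Theorem theorem4p3 (C : numClosedFieldType) (n : nat) (alpha : nat -> C) (beta : C) :
  (2 <= n)%N ->
  `|beta| = 1 ->
  (forall j : nat, (j <= n - 2)%N -> `|alpha j| < 1) ->
  let a0 := alpha 0%N in
  let alpha' := fun j : nat => alpha j.+1 in
  Ppar n alpha beta =
    (2^-1)%:P * ('X - (a0^*)%:P + 1 - a0 *: 'X) * Ppar n.-1 alpha' beta
  + (2^-1)%:P * ('X - (a0^*)%:P - 1 + a0 *: 'X) * Qpar n.-1 alpha' beta
  /\
  Qpar n alpha beta =
    (2^-1)%:P * ('X + (a0^*)%:P + 1 + a0 *: 'X) * Qpar n.-1 alpha' beta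
  + (2^-1)%:P * ('X + (a0^*)%:P - 1 - a0 *: 'X) * Ppar n.-1 alpha' beta.
Proof.
move=> n2 _ _ a0 alpha'.
case: n n2 => [|[|m]] // _.
have h2 : (2^-1)%:P * 2 = 1 :> {poly C}.
  by rewrite -polyC_natr -polyCM mulVf ?pnatr_eq0.
set t := (2^-1)%:P in h2 *.
have ePsi k : F alpha 1 (-1) k = (Psi alpha k, - rstar k (Psi alpha k)).
  by rewrite F_neg F_Phi.
have ePsi' k : F alpha' 1 (-1) k = (Psi alpha' k, - rstar k (Psi alpha' k)).
  by rewrite F_neg F_Phi.
have E1 : F alpha 1 1 m.+1 =
  F alpha' (t * ('X - (a0^*)%:P + 1 - a0 *: 'X) * 1 + t * ('X - (a0^*)%:P - 1 + a0 *: 'X) * 1)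
           (t * ('X - (a0^*)%:P + 1 - a0 *: 'X) * 1 + t * ('X - (a0^*)%:P - 1 + a0 *: 'X) * (-1)) m.
  rewrite F_shift; congr F.
    apply: (@eq_trans _ _ ((t * 2) * ('X * 1 - a0^* *: 1))); first by rewrite h2 mul1r.
    rewrite -!mul_polyC /a0; ring.
  apply: (@eq_trans _ _ ((t * 2) * (1 - a0 *: ('X * 1)))); first by rewrite h2 mul1r.
  rewrite -!mul_polyC /a0; ring.
have E2 : F alpha 1 (-1) m.+1 =
  F alpha' (t * ('X + (a0^*)%:P - 1 - a0 *: 'X) * 1 + t * ('X + (a0^*)%:P + 1 + a0 *: 'X) * 1)
           (t * ('X + (a0^*)%:P - 1 - a0 *: 'X) * 1 + t * ('X + (a0^*)%:P + 1 + a0 *: 'X) * (-1)) m.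
  rewrite F_shift; congr F.
    apply: (@eq_trans _ _ ((t * 2) * ('X * 1 - a0^* *: -1))); first by rewrite h2 mul1r.
    rewrite -!mul_polyC /a0; ring.
  apply: (@eq_trans _ _ ((t * 2) * (-1 - a0 *: ('X * 1)))); first by rewrite h2 mul1r.
  rewrite -!mul_polyC /a0; ring.
rewrite F_lin F_Phi ePsi' in E1.
rewrite F_lin F_Phi ePsi' ePsi in E2.
rewrite F_Phi in E1.
case: E1 => E1a E1b; case: E2 => E2a E2b.
rewrite /Ppar /Qpar !succnK -[rstar _ (Psi alpha m.+1)]opprK E2b E1b E1a E2a.
split; rewrite -!mul_polyC; ring.
Qed.
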